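(* Let $(A,\cdot,\alpha)$ be a Hom-associative algebra, $(V,l,r,\beta)$ an $A$-bimodule and $T:V\to A$ an $\mathcal{O}$-operator associated to $(V,l,r,\beta)$. Define $u\ast v:=l(T(u))v-r(T(u))v$ for $u,v\in V$. Then $(V,\ast,\beta)$ is a Hom-preLie algebra.
   Context: A Hom-associative algebra $(A,\cdot,\alpha)$: $\cdot$ bilinear, $\alpha$ linear, $(x\cdot y)\cdot\alpha(z)=\alpha(x)\cdot(y\cdot z)$. An $A$-bimodule $(V,l,r,\beta)$: a vector space $V$, linear $\beta:V\to V$, linear maps $l,r:A\to\mathfrak{gl}(V)$ with $l(x\cdot y)\beta=l(\alpha(x))l(y)$, $r(\alpha(y))l(x)=l(\alpha(x))r(y)$, $r(\alpha(y))r(x)=r(x\cdot y)\beta$ for all $x,y\in A$. An $\mathcal{O}$-operator associated to $(V,l,r,\beta)$ is a linear $T:V\to A$ with $\alpha T=T\beta$ and $T(u)\cdot T(v)=T(l(T(u))v+r(T(v))u)$ for all $u,v\in V$. A Hom-preLie algebra $(S,\ast,\beta)$: $\ast$ bilinear, $\beta$ linear, $(u\ast v)\ast\beta(w)-\beta(u)\ast(v\ast w)=(v\ast u)\ast\beta(w)-\beta(v)\ast(u\ast w)$ for all $u,v,w$. *)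

(* Defs.v *)
From HB Require Import structures.
From mathcomp Require Import all_boot all_order all_algebra.
Set Implicit Arguments. Unset Strict Implicit. Unset Printing Implicit Defensive.
Import GRing.Theory.
Local Open Scope ring_scope.

Section Defs.
Variable K : fieldType.

Definition is_linear (U W : lmodType K) (f : U -> W) : Prop :=
  forall (a : K) (x y : U), f (a *: x + y) = a *: f x + f y.

Definition is_bilinear (U W X : lmodType K) (f : U -> W -> X) : Prop :=
  (forall w : W, is_linear (fun u => f u w)) /\ (forall u : U, is_linear (f u)).

Definition HomAssociative (A : lmodType K) (mul : A -> A -> A) (alpha : A -> A)
  : Prop :=
  [/\ is_bilinear mul, is_linear alpha &
      forall x y z : A, mul (mul x y) (alpha z) = mul (alpha x) (mul y z)].

Definition HomBimodule (A V : lmodType K) (mul : A -> A -> A) (alpha : A -> A)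
  (l r : A -> V -> V) (beta : V -> V) : Prop :=
  is_linear beta /\ is_bilinear l /\ is_bilinear r /\
  (forall (x y : A) (v : V), l (mul x y) (beta v) = l (alpha x) (l y v)) /\
  (forall (x y : A) (v : V), r (alpha y) (l x v) = l (alpha x) (r y v)) /\
  (forall (x y : A) (v : V), r (alpha y) (r x v) = r (mul x y) (beta v)).

Definition OOperator (A V : lmodType K) (mul : A -> A -> A) (alpha : A -> A)
  (l r : A -> V -> V) (beta : V -> V) (T : V -> A) : Prop :=
  [/\ is_linear T,
      (forall v : V, alpha (T v) = T (beta v)) &
      (forall u v : V, mul (T u) (T v) = T (l (T u) v + r (T v) u))].

Definition HomPreLie (S : lmodType K) (star : S -> S -> S) (beta : S -> S)
  : Prop :=
  [/\ is_bilinear star, is_linear beta &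
      forall u v w : S,
        star (star u v) (beta w) - star (beta u) (star v w)
        = star (star v u) (beta w) - star (beta v) (star u w)].

End Defs.

(* Main.v *)
Require Import Defs.
From mathcomp Require Import all_boot all_order all_algebra.
Import GRing.Theory.
Local Open Scope ring_scope.

Set Implicit Arguments.
Section L.
Variables (K : fieldType) (U W : lmodType K) (f : U -> W).
Hypothesis hf : is_linear f.
Lemma lin0 : f 0 = 0.
Proof. have := hf 1 0 0; rewrite !scale1r !addr0 => h; apply: (addrI (f 0)); by rewrite addr0 -h. Qed.
Lemma linD x y : f (x + y) = f x + f y.
Proof. by have := hf 1 x y; rewrite !scale1r. Qed.
Lemma linN x : f (- x) = - f x.
Proof. by have := hf (-1) x 0; rewrite !scaleN1r !addr0 lin0 addr0. Qed.
Lemma linB x y : f (x - y) = f x - f y.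
Proof. by rewrite linD linN. Qed.
End L.

Lemma ab (V : zmodType) (L R A B C D E F : V) :
  L + (A - B) - (R + (C - D)) - (A - E - (F - D)) = L - R - B + F + E - C.
Proof.
rewrite !opprD !opprK !addrA.
by rewrite [LHS](ACl ((1*4*3*9*8*5)*(2*7)*(6*10))) /= !subrr !addr0.
Qed.

Lemma ab2 (V : zmodType) (L R B C E F : V) :
  L - R - (B - F - (E - C)) = L - R - B + F + E - C.
Proof. by rewrite !opprD !opprK !addrA. Qed.

Theorem mainTheorem16 (K : fieldType) (A V : lmodType K)
  (mul : A -> A -> A) (alpha : A -> A) (l r : A -> V -> V) (beta : V -> V)
  (T : V -> A) :
  HomAssociative mul alpha ->
  HomBimodule mul alpha l r beta ->
  OOperator mul alpha l r beta T ->
  HomPreLie (fun u v : V => l (T u) v - r (T u) v) beta.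
Proof.
case=> [[mul1 mul2] _ _] [lb [[l1 l2] [[r1 r2] [b1 [b2 b3]]]]] [lT Ta TO].
split => //.
  split.
    move=> w a x y /=.
    by rewrite (lT a x y) (l1 w) (r1 w) scalerBr opprD addrACA.
  move=> u a x y /=.
  by rewrite (l2 _ a) (r2 _ a) scalerBr opprD addrACA.
move=> u v w.
set x := T u; set y := T v.
have E : T (l x v - r x v) = T (l y u - r y u) + (mul x y - mul y x).
  rewrite !TO !(linB lT) !(linD lT) -/x -/y.
  set p := T (l x v); set q := T (r x v); set s := T (l y u); set t := T (r y u).
  by rewrite [p + t]addrC opprD !addrA subrK addrAC addrAC [s + p]addrC addrK.
rewrite E -!Ta -/x -/y.
have lD a b z : l (a + b) z = l a z + l b z by exact: (linD (l1 z)).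
have rD a b z : r (a + b) z = r a z + r b z by exact: (linD (r1 z)).
have lB a b z : l (a - b) z = l a z - l b z by exact: (linB (l1 z)).
have rB a b z : r (a - b) z = r a z - r b z by exact: (linB (r1 z)).
have lB2 a b z : l z (a - b) = l z a - l z b by exact: (linB (l2 z)).
have rB2 a b z : r z (a - b) = r z a - r z b by exact: (linB (r2 z)).
rewrite lD rD lB rB !b1 -!b3 !lB2 !rB2 !b2 ab.
by rewrite ab2.
Qed.
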